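(* Let $G$ be a connected groupoid with finite object set $G_0=\{e_1,\dots,e_r\}$, $A=\bigoplus_{i=1}^r A_i$ a unital ring with $A_i:=A_{e_i}\neq 0$, and $\alpha=(A_g,\alpha_g)_{g\in G}$ a unital global action of $G$ on $A$. If $A\subset A\star_\alpha G$ is a separable extension, then there exists $i\in\{1,\dots,r\}$ such that $A_i\subset A_i\star_{\alpha_{(e_i)}}G(e_i)$ is a separable extension.
   Context: A groupoid $G$ is a small category in which every morphism is invertible; $G_0$ is its object set (objects identified with identity morphisms), $s,t$ source and target; $gh$ is defined iff $s(g)=t(h)$; $G(e,f)$ is the set of morphisms from $e$ to $f$, $G(e):=G(e,e)$ is the isotropy group at $e$; $G$ is connected if $G(e,f)\neq\emptyset$ for all $e,f\in G_0$. A unital global action of $G$ on $A$ is a family $\alpha=(A_g,\alpha_g)_{g\in G}$ with $A_g=A_{t(g)}$ a two-sided ideal of $A$ of the form $A1_{t(g)}$, $1_{t(g)}$ a central idempotent, $\alpha_g:A_{s(g)}\to A_{t(g)}$ ring isomorphisms, $\alpha_e=\mathrm{id}_{A_e}$ for $e\in G_0$ and $\alpha_g\alpha_h=\alpha_{gh}$ whenever $s(g)=t(h)$. For $e\in G_0$, $\alpha_{(e)}=(A_e,\alpha_g)_{g\in G(e)}$ is the induced action of the group $G(e)$ on $A_e$, and $A_e\star_{\alpha_{(e)}}G(e)=\bigoplus_{g\in G(e)}A_e\delta_g$ is the skew group ring with $(a\delta_g)(b\delta_h)=a\alpha_g(b)\delta_{gh}$, containing $A_e$ as $A_e\delta_e$.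 The skew groupoid ring $A\star_\alpha G=\bigoplus_{g\in G}A_g\delta_g$ has multiplication $(a_g\delta_g)(b_h\delta_h)=\alpha_g(\alpha_{g^{-1}}(a_g)b_h)\delta_{gh}$ if $s(g)=t(h)$ and $0$ otherwise; it is unital with $1=\sum_{e\in G_0}1_e\delta_e$, and $A$ is regarded as a subring via $a\mapsto\sum_{e\in G_0}(a1_e)\delta_e$. A ring extension $R\subseteq S$ is separable if the multiplication map $S\otimes_R S\to S$ splits as a map of $(S,S)$-bimodules; equivalently there exists $x\in S\otimes_R S$ with $m(x)=1_S$ and $sx=xs$ for all $s\in S$. *)

(* Defs.v *)
From HB Require Import structures.
From mathcomp Require Import all_boot all_order all_algebra.
Set Implicit Arguments. Unset Strict Implicit. Unset Printing Implicit Defensive.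
Import GRing.Theory.
Local Open Scope ring_scope.

(* Objects form a (finite) type [obj]; the object e is identified with *)
(* the identity morphism [idm e].  [comp g h] is gh, meaningful only   *)
(* when src g = tgt h (its value otherwise is irrelevant).             *)
Record groupoid := Groupoid {
  obj : finType;
  mor : eqType;
  src : mor -> obj;
  tgt : mor -> obj;
  idm : obj -> mor;
  comp : mor -> mor -> mor;
  inv : mor -> mor;
  src_idm : forall e, src (idm e) = e;
  tgt_idm : forall e, tgt (idm e) = e;
  src_comp : forall g h, src g = tgt h -> src (comp g h) = src h;
  tgt_comp : forall g h, src g = tgt h -> tgt (comp g h) = tgt g;
  compA : forall g h k, src g = tgt h -> src h = tgt k ->
            comp g (comp h k) = comp (comp g h) k;
  comp_idml : forall g, comp (idm (tgt g)) g = g;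
  comp_idmr : forall g, comp g (idm (src g)) = g;
  src_inv : forall g, src (inv g) = tgt g;
  tgt_inv : forall g, tgt (inv g) = src g;
  comp_invr : forall g, comp g (inv g) = idm (tgt g);
  comp_invl : forall g, comp (inv g) g = idm (src g)
}.

Definition connected (G : groupoid) : Prop :=
  forall e f : obj G, exists g : mor G, src g = e /\ tgt g = f.

Section Action.
Variables (G : groupoid) (A : nzRingType).
Variables (one_ : obj G -> A) (alpha : mor G -> A -> A).

(* membership in the ideal A_e = A 1_e *)
Definition inA (e : obj G) (a : A) : Prop := a * one_ e = a.

Definition ring_iso_on (e f : obj G) (phi : A -> A) : Prop :=
  [/\ forall a, inA e a -> inA f (phi a),
      forall a b, inA e a -> inA e b -> phi (a + b) = phi a + phi b,
      forall a b, inA e a -> inA e b -> phi (a * b) = phi a * phi b,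
      forall a b, inA e a -> inA e b -> phi a = phi b -> a = b
    & forall b, inA f b -> exists2 a, inA e a & phi a = b].

Record unital_global_action : Prop := {
  one_idem : forall e, one_ e * one_ e = one_ e;
  one_central : forall e a, a * one_ e = one_ e * a;
  alpha_iso : forall g, ring_iso_on (src g) (tgt g) (alpha g);
  alpha_idm : forall e a, inA e a -> alpha (idm e) a = a;
  alpha_comp : forall g h a, src g = tgt h -> inA (src h) a ->
                 alpha g (alpha h a) = alpha (comp g h) a
}.

Definition direct_sum_decomp : Prop :=
  (forall a : A, exists x : obj G -> A,
      (forall e, inA e (x e)) /\ a = \sum_(e : obj G) x e) /\
  (forall x : obj G -> A, (forall e, inA e (x e)) ->
      \sum_(e : obj G) x e = 0 -> forall e, x e = 0).

(* relevant compositions (P = all of G, or P = G(e)), an element of    *)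
(* A *_alpha P = (+)_{g in P} A_g delta_g is represented by a formal   *)
(* sum s : seq (mor * A); the pair (g, a) stands for (a 1_{t(g)}) d_g  *)
(* if P g, and for 0 otherwise.  [sk_eval P s g] is the coefficient of *)
(* delta_g, so two formal sums denote the same element iff their       *)
(* [sk_eval] agree.  Addition is concatenation.                        *)
Definition sk_eval (P : pred (mor G)) (s : seq (mor G * A)) (k : mor G) : A :=
  \sum_(p <- s | P p.1 && (p.1 == k)) p.2 * one_ (tgt p.1).

(* (a_g d_g)(b_h d_h) = alpha_g(alpha_{g^-1}(a_g) b_h) d_{gh} if s(g)=t(h), else 0 *)
Definition sk_mul (P : pred (mor G)) (x y : seq (mor G * A)) : seq (mor G * A) :=
  flatten [seq [seq (comp p.1 q.1,
                     alpha p.1 (alpha (inv p.1) (p.2 * one_ (tgt p.1))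
                                * (q.2 * one_ (tgt q.1))))
               | q <- y & P q.1 && (src p.1 == tgt q.1)]
          | p <- x & P p.1].

(* f : S x S -> M is an R-balanced biadditive map, where S is the skew *)
(* ring (formal sums modulo sk_eval) and R is embedded via [emb].      *)
Definition balanced (P : pred (mor G)) (emb : A -> seq (mor G * A))
    (M : zmodType) (f : seq (mor G * A) -> seq (mor G * A) -> M) : Prop :=
  [/\ forall x x' y, sk_eval P x =1 sk_eval P x' -> f x y = f x' y,
      forall x y y', sk_eval P y =1 sk_eval P y' -> f x y = f x y',
      forall x x' y, f (x ++ x') y = f x y + f x' y,
      forall x y y', f x (y ++ y') = f x y + f x y'
    & forall x y a, f (sk_mul P x (emb a)) y = f x (sk_mul P (emb a) y)].

(* Separability of R ⊆ S: there is x = Σ_i x_i ⊗ y_i in S ⊗_R S with   *)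
(* m(x) = 1_S and s x = x s for all s in S.  Equality in S ⊗_R S is     *)
(* expressed through its universal property: two elements of S ⊗_R S   *)
(* are equal iff every R-balanced biadditive map (to any abelian group) *)
(* takes the same value on them.                                      *)
Definition separable_ext (P : pred (mor G)) (unit : seq (mor G * A))
    (emb : A -> seq (mor G * A)) : Prop :=
  exists xs : seq (seq (mor G * A) * seq (mor G * A)),
    sk_eval P (flatten [seq sk_mul P p.1 p.2 | p <- xs]) =1 sk_eval P unit /\
    forall (s : seq (mor G * A)) (M : zmodType)
           (f : seq (mor G * A) -> seq (mor G * A) -> M),
      balanced P emb f ->
      \sum_(p <- xs) f (sk_mul P s p.1) p.2 = \sum_(p <- xs) f p.1 (sk_mul P p.2 s).

(* A ⊆ A *_alpha G: all morphisms, 1 = Σ_e 1_e d_e, a ↦ Σ_e (a 1_e) d_e *)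
Definition full_pred : pred (mor G) := predT.
Definition full_unit : seq (mor G * A) := [seq (idm e, one_ e) | e <- enum (obj G)].
Definition full_emb (a : A) : seq (mor G * A) :=
  [seq (idm e, a * one_ e) | e <- enum (obj G)].

(* A_e ⊆ A_e *_{alpha_(e)} G(e): morphisms of the isotropy group G(e), *)
(* unit 1_e d_e, and a ∈ A_e ↦ a d_e (every a ∈ A_e is a * 1_e).        *)
Definition iso_pred (e : obj G) : pred (mor G) :=
  fun g => (src g == e) && (tgt g == e).
Definition iso_unit (e : obj G) : seq (mor G * A) := [:: (idm e, one_ e)].
Definition iso_emb (e : obj G) (a : A) : seq (mor G * A) := [:: (idm e, a * one_ e)].

End Action.

(* Main.v *)
Require Import Defs.
From HB Require Import structures.
From mathcomp Require Import all_boot all_order all_algebra.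
From Stdlib Require Import ClassicalEpsilon.
Set Implicit Arguments. Unset Strict Implicit. Unset Printing Implicit Defensive.
Import GRing.Theory.
Local Open Scope ring_scope.

Section Gen.
Variables (G : groupoid) (A : nzRingType).
Variables (one_ : obj G -> A) (alpha : mor G -> A -> A).
Notation ev := (sk_eval one_).
Notation mul := (sk_mul one_ alpha).

Lemma ev_cat P x y k : ev P (x ++ y) k = ev P x k + ev P y k.
Proof. by rewrite /sk_eval big_cat. Qed.

Lemma ev_nil P k : ev P [::] k = 0.
Proof. by rewrite /sk_eval big_nil. Qed.

Lemma ev_flatten P xs k : ev P (flatten xs) k = \sum_(x <- xs) ev P x k.
Proof.
elim: xs => [|x xs IH] /=; first by rewrite ev_nil big_nil.
by rewrite ev_cat IH big_cons.
Qed.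

Lemma ev1 P g a k : ev P [:: (g, a)] k = if P g && (g == k) then a * one_ (tgt g) else 0.
Proof. by rewrite /sk_eval big_cons big_nil /=; case: ifP; rewrite ?addr0. Qed.

Lemma mul_catl P x x' y : mul P (x ++ x') y = mul P x y ++ mul P x' y.
Proof. by rewrite /sk_mul filter_cat map_cat flatten_cat. Qed.

Lemma mul_nill P y : mul P [::] y = [::].
Proof. by []. Qed.

Lemma mul_consl P p x y : mul P (p :: x) y = mul P [:: p] y ++ mul P x y.
Proof. by rewrite -mul_catl. Qed.

Lemma mul_expand P x y :
  mul P x y = flatten [seq flatten [seq mul P [:: p] [:: q] | q <- y] | p <- x].
Proof.
elim: x => [|p x IH] //=; rewrite mul_consl IH; congr (_ ++ _); clear IH.
elim: y => [|q y IHy] /=; first by rewrite /sk_mul /=; case: ifP.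
rewrite -IHy /sk_mul /=; case: (P p.1) => //=.
by case: ifP => //=; rewrite !cats0.
Qed.

Lemma ev_mul P' (T : seq (mor G * A) -> seq (mor G * A)) P x y k :
  (forall z z', T (z ++ z') = T z ++ T z') -> T [::] = [::] ->
  ev P' (T (mul P x y)) k = \sum_(p <- x) \sum_(q <- y) ev P' (T (mul P [:: p] [:: q])) k.
Proof.
move=> Tc T0; rewrite mul_expand.
have Tf : forall zs, T (flatten zs) = flatten (map T zs).
  by elim=> [|z zs IH] //=; rewrite Tc IH.
rewrite Tf ev_flatten big_map big_map; apply: eq_bigr => p _.
by rewrite Tf ev_flatten !big_map.
Qed.

Lemma ev_mul_id P x y k :
  ev P (mul P x y) k = \sum_(p <- x) \sum_(q <- y) ev P (mul P [:: p] [:: q]) k.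
Proof. exact: (@ev_mul P id). Qed.

Lemma ev_mul_flat P xs ys k :
  ev P (mul P (flatten xs) (flatten ys)) k =
  \sum_(a <- xs) \sum_(b <- ys) ev P (mul P a b) k.
Proof.
rewrite ev_mul_id big_flatten; apply: eq_bigr => a _ /=.
under [in RHS]eq_bigr => b _ do rewrite ev_mul_id.
rewrite [RHS]exchange_big /=; apply: eq_bigr => p _.
by rewrite big_flatten.
Qed.

End Gen.

Section Grp.
Variable G : groupoid.
Notation cmp := (@Defs.comp G).

Lemma canc1 (g h : mor G) : src h = src g -> cmp (cmp h (Defs.inv g)) g = h.
Proof.
move=> E; rewrite -Defs.compA ?comp_invl -?E ?comp_idmr //.
  by rewrite tgt_inv.
by rewrite src_inv.
Qed.

Lemma canc2 (g k : mor G) : src k = tgt g -> cmp (cmp k g) (Defs.inv g) = k.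
Proof.
move=> E; rewrite -Defs.compA ?comp_invr -?E ?comp_idmr //.
by rewrite tgt_inv.
Qed.

Lemma canc3 (g h : mor G) : tgt h = src g -> cmp (Defs.inv g) (cmp g h) = h.
Proof.
move=> E; rewrite Defs.compA ?comp_invl -?E ?comp_idml //.
by rewrite src_inv.
Qed.

Lemma canc4 (g k : mor G) : tgt k = tgt g -> cmp g (cmp (Defs.inv g) k) = k.
Proof.
move=> E; rewrite Defs.compA ?comp_invr -?E ?comp_idml //.
by rewrite tgt_inv.
by rewrite src_inv.
Qed.
End Grp.

Section Act.
Variables (G : groupoid) (A : nzRingType).
Variables (one_ : obj G -> A) (alpha : mor G -> A -> A).
Hypothesis H : unital_global_action one_ alpha.
Notation inA := (inA one_).
Notation cmp := (@Defs.comp G).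
Notation iv := (@Defs.inv G).

Lemma oneC e a : a * one_ e = one_ e * a. Proof. exact: one_central H e a. Qed.
Lemma oneI e : one_ e * one_ e = one_ e. Proof. exact: one_idem H e. Qed.

Lemma inAM1 e a : inA e (a * one_ e).
Proof. by rewrite /Defs.inA -mulrA oneI. Qed.

Lemma inA_mulr e a b : inA e b -> inA e (a * b).
Proof. by rewrite /Defs.inA -mulrA => ->. Qed.

Lemma inA_mull e a b : inA e a -> inA e (a * b).
Proof. by move=> ha; rewrite /Defs.inA -mulrA oneC mulrA ha. Qed.

Lemma inA0 e : inA e 0. Proof. by rewrite /Defs.inA mul0r. Qed.
Lemma inAD e a b : inA e a -> inA e b -> inA e (a + b).
Proof. by rewrite /Defs.inA mulrDl => -> ->. Qed.

Lemma inA_sum e (I : Type) (r : seq I) (Q : pred I) (F : I -> A) :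
  (forall i, Q i -> inA e (F i)) -> inA e (\sum_(i <- r | Q i) F i).
Proof. by move=> hF; elim/big_ind: _ => //; [exact: inA0 | exact: inAD]. Qed.

Lemma al_in g a : inA (src g) a -> inA (tgt g) (alpha g a).
Proof. by case: (alpha_iso H g) => h _ _ _ _; apply: h. Qed.
Lemma alD g a b : inA (src g) a -> inA (src g) b -> alpha g (a + b) = alpha g a + alpha g b.
Proof. by case: (alpha_iso H g) => _ h _ _ _; apply: h. Qed.
Lemma alM g a b : inA (src g) a -> inA (src g) b -> alpha g (a * b) = alpha g a * alpha g b.
Proof. by case: (alpha_iso H g) => _ _ h _ _; apply: h. Qed.
Lemma al0 g : alpha g 0 = 0.
Proof.
have := alD (inA0 (src g)) (inA0 (src g)); rewrite addr0 => E.
by apply: (@addrI _ (alpha g 0)); rewrite addr0 -E.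
Qed.

Lemma al_sum g (I : Type) (r : seq I) (Q : pred I) (F : I -> A) :
  (forall i, Q i -> inA (src g) (F i)) ->
  alpha g (\sum_(i <- r | Q i) F i) = \sum_(i <- r | Q i) alpha g (F i).
Proof.
move=> hF; elim: r => [|i r IH]; first by rewrite !big_nil al0.
rewrite !big_cons; case: ifP => Qi //.
by rewrite alD ?IH //; [apply: hF | apply: inA_sum].
Qed.

Lemma al_comp g h a : src g = tgt h -> inA (src h) a -> alpha g (alpha h a) = alpha (cmp g h) a.
Proof. by move=> E ha; apply: (alpha_comp H E ha). Qed.

Lemma al_id e a : inA e a -> alpha (idm e) a = a.
Proof. by move=> ha; apply: (alpha_idm H ha). Qed.

Lemma al_inv g a : inA (tgt g) a -> alpha g (alpha (iv g) a) = a.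
Proof.
move=> ha; rewrite al_comp ?tgt_inv ?src_inv // comp_invr al_id //.
Qed.

Lemma mu g a b : inA (tgt g) a -> inA (src g) b ->
  alpha g (alpha (iv g) a * b) = a * alpha g b.
Proof.
move=> ha hb; rewrite alM ?al_inv //.
by rewrite -(tgt_inv g); apply: al_in; rewrite src_inv.
Qed.

Lemma ev_in P x k : inA (tgt k) (sk_eval one_ P x k).
Proof.
apply: inA_sum => -[g a] /= /andP[_ /eqP->]; exact: inAM1.
Qed.

Lemma mul1 P g a h b :
  sk_mul one_ alpha P [:: (g, a)] [:: (h, b)] =
  if P g && P h && (src g == tgt h) then
    [:: (cmp g h, a * one_ (tgt g) * alpha g (b * one_ (tgt h)))] else [::].
Proof.
rewrite /sk_mul /=; case: (P g) => //=; case: (P h) => //=; case: eqP => //= E.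
rewrite mu //; [exact: inAM1 | rewrite E; exact: inAM1].
Qed.

End Act.


Section Main.
Variables (G : groupoid) (A : nzRingType).
Variables (one_ : obj G -> A) (alpha : mor G -> A -> A).
Hypothesis H : unital_global_action one_ alpha.
Variable e : obj G.
Variable g : obj G -> mor G.
Hypothesis hs : forall f, src (g f) = f.
Hypothesis ht : forall f, tgt (g f) = e.
Notation inA := (inA one_).
Notation cmp := (@Defs.comp G).
Notation iv := (@Defs.inv G).
Notation iso := (iso_pred e).
Notation fp := (@full_pred G).
Notation ev := (sk_eval one_).
Notation mul := (sk_mul one_ alpha).

Lemma tgtI (x : obj G) : tgt (idm x) = x. Proof. exact: tgt_idm. Qed.
Lemma srcI (x : obj G) : src (idm x) = x. Proof. exact: src_idm. Qed.
Lemma cmpI (h : mor G) : cmp h (idm (src h)) = h. Proof. exact: comp_idmr. Qed.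
Lemma Icmp (h : mor G) : cmp (idm (tgt h)) h = h. Proof. exact: comp_idml. Qed.

Definition Lm f (p : mor G * A) : seq (mor G * A) :=
  if (src p.1 == f) && (tgt p.1 == e) then [:: (cmp p.1 (iv (g f)), p.2 * one_ e)] else [::].
Definition L f x := flatten (map (Lm f) x).
Definition Rm f (p : mor G * A) : seq (mor G * A) :=
  if (src p.1 == e) && (tgt p.1 == f) then [:: (cmp (g f) p.1, alpha (g f) (p.2 * one_ f))] else [::].
Definition R f x := flatten (map (Rm f) x).

Lemma L_cat f x y : L f (x ++ y) = L f x ++ L f y.
Proof. by rewrite /L map_cat flatten_cat. Qed.
Lemma R_cat f x y : R f (x ++ y) = R f x ++ R f y.
Proof. by rewrite /R map_cat flatten_cat. Qed.
Lemma L1 f p : L f [:: p] = Lm f p. Proof. by rewrite /L /= cats0. Qed.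
Lemma R1 f p : R f [:: p] = Rm f p. Proof. by rewrite /R /= cats0. Qed.

Lemma keyL f h k :
  [&& src h == f, tgt h == e, iso (cmp h (iv (g f))) & cmp h (iv (g f)) == k]
  = iso k && (h == cmp k (g f)).
Proof.
apply/idP/idP.
  case/and4P => /eqP sh /eqP th _ /eqP <-.
  rewrite canc1 ?eqxx ?andbT ?hs //.
  rewrite /iso_pred src_comp ?tgt_comp ?src_inv ?tgt_inv ?ht ?hs ?th ?eqxx //.
case/andP => /andP[/eqP sk /eqP tk] /eqP ->.
rewrite src_comp ?tgt_comp ?hs ?ht ?tk ?eqxx //= canc2 ?ht ?eqxx ?andbT //.
by rewrite /iso_pred sk tk eqxx.
Qed.

Lemma keyR f h k :
  [&& src h == e, tgt h == f, iso (cmp (g f) h) & cmp (g f) h == k]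
  = iso k && (h == cmp (iv (g f)) k).
Proof.
apply/idP/idP.
  case/and4P => /eqP sh /eqP th _ /eqP <-.
  rewrite canc3 ?eqxx ?andbT ?hs //.
  rewrite /iso_pred src_comp ?tgt_comp ?ht ?hs ?th ?sh ?eqxx //.
case/andP => /andP[/eqP sk /eqP tk] /eqP ->.
rewrite src_comp ?tgt_comp ?src_inv ?tgt_inv ?hs ?ht ?tk ?sk ?eqxx //= canc4 ?ht ?eqxx ?andbT //.
by rewrite /iso_pred sk tk eqxx.
Qed.

Lemma evLm f p k :
  ev iso (Lm f p) k = if iso k then ev fp [:: p] (cmp k (g f)) else 0.
Proof.
case: p => h a; rewrite /Lm /= ev1 /full_pred /=.
have := keyL f h k; case: ifP => C.
  case/andP: C => /eqP sh /eqP th; rewrite sh th !eqxx /= => K.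
  rewrite ev1 /= K; case: (iso k) => //; case: eqP => // Eh; subst h.
  rewrite /= tgt_comp ?th -?mulrA ?(oneI H) //.
  by rewrite tgt_inv sh hs.
move=> K; rewrite ev_nil; case Ik: (iso k) => //.
case: eqP => // Eh; subst h; move: Ik => /andP[/eqP sk /eqP tk].
by rewrite src_comp ?tgt_comp ?ht ?hs ?tk ?eqxx in C.
Qed.

Lemma evRm f p k :
  ev iso (Rm f p) k = if iso k then alpha (g f) (ev fp [:: p] (cmp (iv (g f)) k)) else 0.
Proof.
case: p => h a; rewrite /Rm /= ev1 /full_pred /=.
have := keyR f h k; case: ifP => C.
  case/andP: C => /eqP sh /eqP th; rewrite sh th !eqxx /= => K.
  rewrite ev1 /= K; case: (iso k) => //=; case: eqP => // Eh; last by rewrite (al0 H).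
  subst h; rewrite tgt_comp; last by rewrite hs th.
  apply: (al_in H); rewrite hs; exact: (inAM1 H).
move=> K; rewrite ev_nil; case Ik: (iso k) => //.
case: eqP => Eh; last by rewrite (al0 H).
subst h; move: Ik => /andP[/eqP sk /eqP tk].
by rewrite src_comp ?tgt_comp ?src_inv ?tgt_inv ?ht ?hs ?tk ?sk ?eqxx in C.
Qed.

Lemma ev_seq P x k : ev P x k = \sum_(p <- x) ev P [:: p] k.
Proof.
elim: x => [|p x IH]; first by rewrite ev_nil big_nil.
by rewrite -cat1s ev_cat IH big_cons.
Qed.

Lemma evL f x k : ev iso (L f x) k = if iso k then ev fp x (cmp k (g f)) else 0.
Proof.
rewrite /L ev_flatten big_map; under eq_bigr do rewrite evLm.
case: (iso k); last by rewrite big1.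
by rewrite [RHS]ev_seq.
Qed.

Lemma evR f x k : ev iso (R f x) k =
  if iso k then alpha (g f) (ev fp x (cmp (iv (g f)) k)) else 0.
Proof.
rewrite /R ev_flatten big_map; under eq_bigr do rewrite evRm.
case Ik: (iso k); last by rewrite big1.
rewrite [in RHS]ev_seq (al_sum H) // => p _.
have := ev_in H fp [:: p] (cmp (iv (g f)) k).
rewrite tgt_comp ?tgt_inv ?hs //; rewrite src_inv ht.
by case/andP: Ik => _ /eqP.
Qed.

Lemma embr_full x a k :
  ev fp (mul fp x (full_emb one_ a)) k = ev fp x k * alpha k (a * one_ (src k)).
Proof.
rewrite ev_mul_id [ev fp x k]ev_seq mulr_suml; apply: eq_bigr => -[h c] _.
rewrite /full_emb big_map big_enum /= (bigD1 (src h)) //= big1 ?addr0; last first.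
  move=> e1 ne; rewrite (mul1 H) /full_pred /=.
  have -> : tgt (idm e1) = e1 by apply: tgt_idm.
  by rewrite eq_sym (negPf ne) ev_nil.
rewrite (mul1 H) /full_pred /= tgtI eqxx /= !ev1 /full_pred /= cmpI.
case: eqP => [->|]; last by rewrite mul0r.
rewrite -[a * _ * _]mulrA (oneI H) -!mulrA; congr (_ * _).
congr (_ * _).
apply: (al_in H); exact: (inAM1 H).
Qed.

Lemma embl_full y a k :
  ev fp (mul fp (full_emb one_ a) y) k = a * one_ (tgt k) * ev fp y k.
Proof.
rewrite ev_mul_id exchange_big [ev fp y k]ev_seq mulr_sumr; apply: eq_bigr => -[h c] _.
rewrite /full_emb big_map big_enum /= (bigD1 (tgt h)) //= big1 ?addr0; last first.
  move=> e1 ne; rewrite (mul1 H) /full_pred /=.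
  have -> : src (idm e1) = e1 by apply: src_idm.
  by rewrite (negPf ne) ev_nil.
rewrite (mul1 H) /full_pred /= srcI eqxx /= !ev1 /full_pred /= Icmp.
case: eqP => [->|]; last by rewrite mulr0.
rewrite tgtI (al_id H); last exact: (inAM1 H).
rewrite -[a * _ * _]mulrA (oneI H) -!mulrA; congr (_ * _); congr (_ * _).
by rewrite (oneI H).
Qed.

Lemma embr_iso x b k :
  ev iso (mul iso x (iso_emb one_ e b)) k = ev iso x k * alpha k (b * one_ e).
Proof.
rewrite ev_mul_id [ev iso x k]ev_seq mulr_suml; apply: eq_bigr => -[h c] _.
rewrite /iso_emb big_cons big_nil addr0 (mul1 H) ev1 /=.
rewrite /iso_pred /= srcI tgtI !eqxx /= andbT.
case Ih: ((src h == e) && (tgt h == e)) => /=; last by rewrite ev_nil mul0r.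
case/andP: Ih => /eqP sh /eqP th; rewrite sh eqxx /= ev1.
have -> : cmp h (idm e) = h by rewrite -sh cmpI.
rewrite sh th !eqxx /=; case: eqP => [<-|]; last by rewrite mul0r.
rewrite -[b * _ * _]mulrA (oneI H) -!mulrA; congr (_ * _); congr (_ * _).
have hin : inA (tgt h) (alpha h (b * one_ (src h))) by apply: (al_in H); exact: (inAM1 H).
by move: hin; rewrite sh th.
Qed.

Lemma embl_iso y b k :
  ev iso (mul iso (iso_emb one_ e b) y) k = b * one_ e * ev iso y k.
Proof.
rewrite ev_mul_id /iso_emb big_cons big_nil addr0 [ev iso y k]ev_seq mulr_sumr.
apply: eq_bigr => -[h c] _.
rewrite (mul1 H) ev1 /iso_pred /= srcI tgtI !eqxx /=.
case Ih: ((src h == e) && (tgt h == e)) => /=; last by rewrite ev_nil mulr0.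
case/andP: Ih => /eqP sh /eqP th; rewrite th eqxx /= ev1.
have -> : cmp (idm e) h = h by rewrite -th Icmp.
rewrite sh th !eqxx /=; case: (h =P k) => [_|_]; last by rewrite mulr0.
rewrite (al_id H); last exact: (inAM1 H).
rewrite -[b * _ * _]mulrA (oneI H) -!mulrA; congr (_ * _); congr (_ * _).
by rewrite (oneI H).
Qed.

Lemma mulx0 P x : mul P x [::] = [::].
Proof. by rewrite /sk_mul; elim: x => //= p x; case: (P p.1). Qed.

Lemma C1 f h a q k : iso h ->
  ev iso (L f (mul fp [:: (h, a)] [:: q])) k = ev iso (mul iso [:: (h, a)] (Lm f q)) k.
Proof.
case/andP=> /eqP sh /eqP th; case: q => h' b.
rewrite (mul1 H) /full_pred /= /Lm /=.
case E: ((src h' == f) && (tgt h' == e)); last first.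
  rewrite mulx0 ev_nil; case: eqP => [E2|_]; last by rewrite ev_nil.
  rewrite L1 /Lm /= src_comp // tgt_comp // th eqxx andbT.
  move: E; rewrite -E2 sh eqxx andbT => ->; exact: ev_nil.
case/andP: E => /eqP sh' /eqP th'.
rewrite sh th' eqxx /= L1 /Lm /= src_comp ?tgt_comp ?sh' ?th ?th' ?eqxx //=.
rewrite (mul1 H) /iso_pred /= sh th src_comp ?tgt_comp ?src_inv ?tgt_inv ?ht ?th' ?hs ?sh' ?eqxx //=.
rewrite !ev1 -Defs.compA ?tgt_inv ?hs ?sh' ?th' ?sh //.
case: ifP => // _.
rewrite -!mulrA (oneI H); congr (_ * _); congr (_ * _).
have -> : tgt (cmp h (cmp h' (iv (g f)))) = e by rewrite !tgt_comp ?th ?th' ?sh ?tgt_inv ?hs ?sh'.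
by rewrite (oneI H).
Qed.

Lemma D1 f h a q k : iso h ->
  ev iso (R f (mul fp [:: q] [:: (h, a)])) k = ev iso (mul iso (Rm f q) [:: (h, a)]) k.
Proof.
case/andP=> /eqP sh /eqP th; case: q => h' b.
rewrite (mul1 H) /full_pred /= /Rm /= th.
case E: ((src h' == e) && (tgt h' == f)); last first.
  rewrite ev_nil; case: eqP => [E2|_]; last by rewrite ev_nil.
  rewrite R1 /Rm /= src_comp ?th // tgt_comp ?th // sh eqxx /=.
  move: E; rewrite E2 eqxx /= => ->; exact: ev_nil.
case/andP: E => /eqP sh' /eqP th'.
rewrite sh' eqxx /= R1 /Rm /= src_comp ?tgt_comp ?sh' ?th ?th' ?sh ?eqxx //=.
rewrite (mul1 H) /iso_pred /= sh th src_comp ?tgt_comp ?ht ?th' ?hs ?sh' ?eqxx //=.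
rewrite !ev1 Defs.compA ?hs ?sh' ?th' ?th //.
case: ifP => // _.
have i1 : inA f (alpha h' (a * one_ e)).
  rewrite -th' -sh'; apply: (al_in H); exact: (inAM1 H).
have i2 : inA e (alpha (g f) (b * one_ f)).
  rewrite -(ht f); apply: (al_in H); rewrite hs; exact: (inAM1 H).
rewrite -[_ * _ * one_ f]mulrA i1 i2 (alM H) ?hs //; last exact: (inAM1 H).
rewrite (al_comp H) ?hs ?th' ?sh' //; exact: (inAM1 H).
Qed.

Lemma E1 p q k :
  \sum_(f <- enum (obj G)) ev iso (mul iso (Lm f p) (Rm f q)) k =
  if iso k then ev fp (mul fp [:: p] [:: q]) k else 0.
Proof.
case: p => h a; case: q => h' b.
rewrite big_enum /= (bigD1 (src h)) //= big1 ?addr0; last first.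
  move=> f1 ne; rewrite /Lm /=.
  have -> : (src h == f1) = false by apply/eqP => E; rewrite E eqxx in ne.
  by rewrite ev_nil.
rewrite /Lm /Rm /= eqxx /= (mul1 H) /full_pred /=.
case Th: (tgt h == e) => /=; last first.
  rewrite ev_nil; case Ik: (iso k) => //; case: (src h =P tgt h') => E; rewrite ?ev1 ?ev_nil //=.
  case: eqP => // E2; move: Ik Th; rewrite -E2 /iso_pred tgt_comp // => /andP[_ ->].
  by [].
case Sh': (src h' == e) => /=; last first.
  rewrite mulx0 ev_nil; case Ik: (iso k) => //; case: (src h =P tgt h') => E; rewrite ?ev1 ?ev_nil //=.
  case: eqP => // E2; move: Ik Sh'; rewrite -E2 /iso_pred src_comp // => /andP[-> _].
  by [].
rewrite eq_sym; case Th': (src h == tgt h') => /=; last by rewrite mulx0 !ev_nil; case: ifP.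
move/eqP: Th => th; move/eqP: Sh' => sh'; move/eqP: Th' => th'.
rewrite (mul1 H) /iso_pred /= src_comp ?tgt_comp ?src_inv ?tgt_inv ?hs ?ht ?th ?sh' ?th' ?eqxx //=.
rewrite !ev1 /=.
rewrite src_comp ?hs ?sh' ?eqxx /=.
have -> : cmp (cmp h (iv (g (tgt h')))) (cmp (g (tgt h')) h') = cmp h h'.
  rewrite -Defs.compA ?canc3 ?tgt_inv ?hs ?th' // tgt_comp ?ht ?hs //.
  by rewrite src_inv.
rewrite ev1 /= src_comp ?tgt_comp ?th ?sh' ?eqxx //=.
case: (cmp h h' =P k) => [E|_]; last by case: ifP.
rewrite -E /iso_pred src_comp ?tgt_comp ?th ?sh' ?th' ?eqxx //=.
have i2 : inA e (alpha (g (tgt h')) (b * one_ (tgt h'))).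
  rewrite -(ht (tgt h')); apply: (al_in H); rewrite hs; exact: (inAM1 H).
have K : alpha (cmp h (iv (g (tgt h')))) (alpha (g (tgt h')) (b * one_ (tgt h')))
    = alpha h (b * one_ (tgt h')).
  rewrite -(al_comp H); last by rewrite src_inv ht.
    rewrite (al_comp H (g:=iv (g (tgt h'))) (h:=g (tgt h'))); last first.
      by rewrite hs; exact: (inAM1 H).
      by rewrite src_inv.
    by rewrite comp_invl hs (al_id H) //; exact: (inAM1 H).
  by rewrite tgt_inv hs.
rewrite i2 K.
rewrite -[a * _ * _]mulrA (oneI H). all: by [].
Qed.

Lemma flat1 (s : seq (mor G * A)) : flatten [seq [:: p] | p <- s] = s.
Proof. by elim: s => //= p s ->. Qed.

Lemma mul_nPl P p y : ~~ P p.1 -> mul P [:: p] y = [::].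
Proof. by move=> np; rewrite /sk_mul /= (negPf np). Qed.

Lemma ev_mul_nPr P x p k : ~~ P p.1 -> ev P (mul P x [:: p]) k = 0.
Proof.
case: p => h' b /= np; rewrite ev_mul_id big1 // => -[h a] _.
by rewrite big_cons big_nil addr0 (mul1 H) (negPf np) andbF /= ev_nil.
Qed.

Lemma CL f s u k :
  ev iso (L f (mul fp [seq p <- s | iso p.1] u)) k = ev iso (mul iso s (L f u)) k.
Proof.
rewrite (@ev_mul G A one_ alpha iso (L f)) //; last by move=> *; rewrite L_cat.
rewrite -{2}[s]flat1 /L ev_mul_flat big_filter big_map big_mkcond /=.
apply: eq_bigr => -[h a] _; rewrite big_map.
case: ifP => Ih; last by rewrite big1 // => q _; rewrite mul_nPl ?Ih ?ev_nil.
by apply: eq_bigr => q _; rewrite C1.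
Qed.

Lemma DR f s v k :
  ev iso (R f (mul fp v [seq p <- s | iso p.1])) k = ev iso (mul iso (R f v) s) k.
Proof.
rewrite (@ev_mul G A one_ alpha iso (R f)) //; last by move=> *; rewrite R_cat.
rewrite -{2}[s]flat1 /R ev_mul_flat big_map; apply: eq_bigr => q _.
rewrite big_filter big_map big_mkcond /=; apply: eq_bigr => -[h a] _.
case: ifP => Ih; last by rewrite ev_mul_nPr ?Ih.
by rewrite D1.
Qed.

Lemma EL u v k :
  \sum_(f <- enum (obj G)) ev iso (mul iso (L f u) (R f v)) k =
  if iso k then ev fp (mul fp u v) k else 0.
Proof.
under eq_bigr => f _ do rewrite /L /R ev_mul_flat big_map.
rewrite exchange_big /=.
rewrite [RHS](_ : _ = \sum_(p <- u) \sum_(q <- v)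
   (if iso k then ev fp (mul fp [:: p] [:: q]) k else 0)); last first.
  by case: (iso k); [rewrite ev_mul_id | rewrite big1 // => p _; rewrite big1].
apply: eq_bigr => p _.
under eq_bigr => f _ do rewrite big_map.
rewrite exchange_big /=; apply: eq_bigr => q _; exact: E1.
Qed.

Lemma ig f a : inA e (alpha (g f) (a * one_ f)).
Proof. rewrite -(ht f); apply: (al_in H); rewrite hs; exact: (inAM1 H). Qed.

Lemma LA f x a : ev iso (L f (mul fp x (full_emb one_ a))) =1
  ev iso (mul iso (L f x) (iso_emb one_ e (alpha (g f) (a * one_ f)))).
Proof.
move=> k; rewrite evL embr_iso evL embr_full.
case Ik: (iso k); last by rewrite mul0r.
case/andP: Ik => /eqP sk /eqP tk.
rewrite src_comp ?hs ?ht // (ig f a) (al_comp H) ?ht //; rewrite hs; exact: (inAM1 H).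
Qed.

Lemma RB f y a : ev iso (R f (mul fp (full_emb one_ a) y)) =1
  ev iso (mul iso (iso_emb one_ e (alpha (g f) (a * one_ f))) (R f y)).
Proof.
move=> k; rewrite evR embl_iso evR embl_full.
case Ik: (iso k); last by rewrite mulr0.
case/andP: Ik => /eqP sk /eqP tk.
have tf : tgt (cmp (iv (g f)) k) = f by rewrite tgt_comp ?tgt_inv ?hs // src_inv ht.
rewrite tf (ig f a) (alM H) ?hs //; first exact: (inAM1 H).
by rewrite -{1}tf; apply: (ev_in H).
Qed.

Lemma F_bal (M : zmodType) (fb : seq (mor G * A) -> seq (mor G * A) -> M) :
  balanced one_ alpha iso (iso_emb one_ e) fb ->
  balanced one_ alpha fp (full_emb one_)
    (fun u v => \sum_(f <- enum (obj G)) fb (L f u) (R f v)).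
Proof.
case=> r1 r2 a1 a2 b; split.
- move=> x x' y E; apply: eq_bigr => f _; apply: r1 => k; by rewrite !evL E.
- move=> x y y' E; apply: eq_bigr => f _; apply: r2 => k; by rewrite !evR E.
- move=> x x' y; rewrite -big_split; apply: eq_bigr => f _; by rewrite L_cat a1.
- move=> x y y'; rewrite -big_split; apply: eq_bigr => f _; by rewrite R_cat a2.
- move=> x y a; apply: eq_bigr => f _; rewrite (r1 _ _ _ (LA f x a)) b.
  by apply: r2 => k; rewrite RB.
Qed.

Definition xsL (xs : seq (seq (mor G * A) * seq (mor G * A))) :=
  flatten [seq [seq (L f p.1, R f p.2) | p <- xs] | f <- enum (obj G)].

Lemma sep_iso : separable_ext one_ alpha fp (full_unit one_) (full_emb one_) ->
  separable_ext one_ alpha iso (iso_unit one_ e) (iso_emb one_ e).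
Proof.
case=> xs [Hm Hc]; exists (xsL xs); split.
  move=> k; rewrite ev_flatten /xsL big_map big_flatten /= big_map.
  under eq_bigr => f _ do rewrite big_map /=.
  rewrite exchange_big /=.
  under eq_bigr => p _ do rewrite EL.
  case Ik: (iso k).
    rewrite -[X in X = _](@big_map _ _ _ _ _ (fun p => mul fp p.1 p.2) xs predT (fun z => ev fp z k)).
    rewrite -ev_flatten Hm /full_unit ev_seq big_map big_enum /= (bigD1 e) //= big1 ?addr0.
      by rewrite /iso_unit !ev1 /full_pred /iso_pred /= srcI tgtI eqxx.
    move=> e1 ne; rewrite ev1 /full_pred /=; case: eqP => // E.
    case/andP: Ik => _ /eqP tk; move: ne; rewrite -tk -E.
    have -> : tgt (idm e1) = e1 by apply: tgt_idm.
    by rewrite eqxx.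
  rewrite big1 // ev1; case: eqP => E; rewrite ?andbF //; move: Ik.
  by rewrite -E /iso_pred srcI tgtI eqxx.
move=> s M fb Hb.
set s' := [seq p <- s | iso p.1].
have := Hc s' M _ (F_bal Hb) => /= HH.
rewrite /xsL !big_flatten !big_map.
under eq_bigr => f _ do rewrite big_map.
under [RHS]eq_bigr => f _ do rewrite big_map.
rewrite exchange_big [RHS]exchange_big.
transitivity (\sum_(p <- xs) \sum_(f <- enum (obj G)) fb (L f (mul fp s' p.1)) (R f p.2)).
rewrite -!enumT.   apply: eq_bigr => p _; apply: eq_bigr => f _.
  case: Hb => r1 _ _ _ _; apply: r1 => k; by rewrite CL.
rewrite -!enumT HH; apply: eq_bigr => p _; apply: eq_bigr => f _.
case: Hb => _ r2 _ _ _; apply: r2 => k; by rewrite DR.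
Qed.

End Main.

Theorem theorem4p4 (G : groupoid) (A : nzRingType)
    (one_ : obj G -> A) (alpha : mor G -> A -> A) :
  connected G ->
  unital_global_action one_ alpha ->
  direct_sum_decomp one_ ->
  (forall e : obj G, one_ e != 0) ->
  separable_ext one_ alpha (@full_pred G) (full_unit one_) (full_emb one_) ->
  exists e : obj G,
    separable_ext one_ alpha (iso_pred e) (iso_unit one_ e) (iso_emb one_ e).
Proof.
move=> conn H ds nz sep.
have [e _] : exists e : obj G, true.
  case: (pickP (@predT (obj G))) => [e _|none]; first by exists e.
  case: ds => hd _; case: (hd 1) => x [_ Ex].
  by move: Ex; rewrite big_pred0 // => /eqP; rewrite oner_eq0.
pose g f := proj1_sig (constructive_indefinite_description _ (conn f e)).
have hs : forall f, src (g f) = f.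
  by move=> f; case: (proj2_sig (constructive_indefinite_description _ (conn f e))).
have ht : forall f, tgt (g f) = e.
  by move=> f; case: (proj2_sig (constructive_indefinite_description _ (conn f e))).
by exists e; apply: (sep_iso H hs ht).
Qed.
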